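(* If $G=(V,E)$ is a finite connected bipartite graph and $P$ is a geodesic (shortest) path in $G$, then $P$ is $(1,1)$-guardable.
   Context: All graphs are finite, connected and reflexive (a loop at every vertex; moving along a loop means passing); loops are ignored for bipartiteness and distances. Cops and Attacking Robbers: the cop player places cops on vertices, then the robber chooses a vertex. In each round the cops move (each cop moves to an adjacent vertex or passes), then the robber moves (to an adjacent vertex or passes). A cop captures the robber by moving onto the robber's vertex. Additionally, if the robber moves onto a vertex occupied by a cop, exactly one cop on that vertex is removed from the game (''attacked''); the robber's initial placement on a cop's vertex does not count as an attack. A subgraph $H$ of $G$ is $(k,t)$-guardable if, in the Cops and Attacking Robbers game on $G$, $k+t$ cops can, in finitely many steps, move so that $k$ cops are placed on vertices of $H$ in such a way that from then on, if the robber ever moves into $H$, the cops immediately capture the robber (the $t$ extra cops are only needed to get the $k$ cops safely into position and are afterwards free). *)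

(* Defs.v *)
From mathcomp Require Import all_boot.
Set Implicit Arguments. Unset Strict Implicit. Unset Printing Implicit Defensive.

(* A finite graph is given by a vertex type T : finType and an adjacency
   relation adj : rel T (assumed reflexive = loops, and symmetric). *)
Section CopsAttackingRobber.
Variables (T : finType) (adj : rel T).

Definition connected_graph : Prop := forall x y : T, connect adj x y.

(* bipartite, loops ignored *)
Definition bipartite : Prop :=
  exists c : T -> bool, forall x y, adj x y -> x != y -> c x != c y.

Definition geodesic (x : T) (p : seq T) : Prop :=
  path adj x p /\
  forall q : seq T, path adj x q -> last x q = last x p -> size p <= size q.

(** The game.  Cop positions are a list of vertices (one entry per cop). *)

(* simultaneous move of all cops: each cop moves to an adjacent vertex
   (or passes along its loop) *)
Definition cop_move (C C' : seq T) : bool := all2 adj C C'.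

(* robber moves onto r: if a cop is on r, exactly one such cop is removed *)
Definition attack (C : seq T) (r : T) : seq T := rem r C.

Definition submultiset (D C : seq T) : Prop :=
  forall v, count_mem v D <= count_mem v C.

(* S is a set of positions (cops D, robber r; robber to move) from which the
   cops D alone keep H guarded: whatever the robber does, the cops D reply
   so that the robber is captured, and necessarily so if it entered H;
   otherwise the position stays in S. *)
Definition guard_invariant (H : {set T}) (S : seq T -> T -> Prop) : Prop :=
  forall D r, S D r -> forall r', adj r r' ->
    exists D', cop_move (attack D r') D' /\
               (r' \in D' \/ (r' \notin H /\ S D' r')).

Definition guards (H : {set T}) (D : seq T) (r : T) : Prop :=
  exists S, guard_invariant H S /\ S D r.

Definition guard_position (k : nat) (H : {set T}) (C : seq T) (r : T) : Prop :=
  exists D : seq T,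
    [/\ size D = k, {subset D <= H}, submultiset D C & guards H D r].

(* From position (C, r) with cops to move, the cops can force in finitely
   many rounds either capture or a guarding position. *)
Inductive cops_force (k : nat) (H : {set T}) : seq T -> T -> Prop :=
| CF_step C r C' :
    cop_move C C' ->
    (r \in C' \/ guard_position k H C' r \/
     (forall r', adj r r' -> cops_force k H (attack C' r') r')) ->
    cops_force k H C r.

(* (k,t)-guardable: k+t cops are placed, the robber then chooses any vertex
   (no attack), and the cops can force the above. *)
Definition guardable (k t : nat) (H : {set T}) : Prop :=
  exists C0 : seq T, size C0 = k + t /\ forall r0 : T, cops_force k H C0 r0.

End CopsAttackingRobber.

(* Main.v *)
Require Import Defs.
From mathcomp Require Import all_boot.
From mathcomp Require Import zify.

Set Implicit Arguments. Unset Strict Implicit. Unset Printing Implicit Defensive.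

Lemma last_take_nth (T : Type) (p : seq T) (x : T) (j : nat) :
  j <= size p -> last x (take j p) = nth x (x :: p) j.
Proof.
elim: p x j => [|a p IH] x j Hj; first by case: j Hj.
case: j Hj => [|j] Hj //=.
rewrite IH //; apply: set_nth_default => /=; move: Hj => /=; lia.
Qed.

Section Proof.
Variables (T : finType) (adj : rel T).
Hypotheses (adj_refl : reflexive adj) (adj_sym : symmetric adj)
  (conn : connected_graph adj) (bip : bipartite adj).
Variables (x : T) (p : seq T).
Hypothesis (geo : geodesic adj x p).

Definition ball m : {set T} :=
  iter m (fun S : {set T} => [set b | [exists a in S, adj a b]]) [set x].

Lemma ballS m y : (y \in ball m.+1) = [exists a in ball m, adj a y].
Proof. by rewrite /= inE. Qed.

Lemma ball_walk q z m : z \in ball m -> path adj z q -> last z q \in ball (m + size q).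
Proof.
elim: q z m => [|a q IH] z m /=; first by rewrite addn0.
move=> Hz /andP [Hza Hq].
rewrite -addSnnS; apply: IH Hq.
by rewrite ballS; apply/existsP; exists z; rewrite Hz.
Qed.

Lemma walk_ball m y : y \in ball m ->
  exists q, [/\ path adj x q, last x q = y & size q = m].
Proof.
elim: m y => [|m IH] y.
  by rewrite /= inE => /eqP ->; exists [::].
rewrite ballS => /existsP [a /andP [Ha Hay]].
have [q [Pq Lq Sq]] := IH a Ha.
exists (rcons q y); split.
- by rewrite rcons_path Pq Lq.
- by rewrite last_rcons.
- by rewrite size_rcons Sq.
Qed.

Lemma exP y : exists m, (fun m => y \in ball m) m.
Proof.
have /connectP [q Pq ->] := conn x y.
exists (0 + size q); apply: ball_walk => //.
by rewrite /= inE.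
Qed.

Definition d y := ex_minn (exP y).

Lemma dP y : y \in ball (d y).
Proof. by rewrite /d; case: ex_minnP. Qed.

Lemma dmin y m : y \in ball m -> d y <= m.
Proof. by rewrite /d; case: ex_minnP => k _ H /H. Qed.

Lemma d_adj a b : adj a b -> d b <= (d a).+1.
Proof.
move=> Hab; apply: dmin; rewrite ballS; apply/existsP; exists a.
by rewrite dP Hab.
Qed.

Lemma dx : d x = 0.
Proof. apply/eqP; rewrite -leqn0; apply: dmin; by rewrite /= inE. Qed.

Lemma d_parity (c : T -> bool) :
  (forall a b, adj a b -> a != b -> c a != c b) ->
  forall y, c y = c x (+) odd (d y).
Proof.
move=> Hc.
suff H : forall m y, d y = m -> c y = c x (+) odd m by move=> y; exact: H.
elim=> [|m IH] y Hy.
  have := dP y; rewrite Hy /= inE => /eqP ->; by rewrite addbF.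
have := dP y; rewrite Hy ballS => /existsP [a /andP [Ha Hay]].
have da : d a = m.
  have := dmin Ha; have := d_adj Hay; rewrite Hy; lia.
have Hne : a != y by apply/eqP => E; move: da; rewrite E Hy; lia.
have := Hc _ _ Hay Hne; rewrite (IH a da) /=.
by case: (c y); case: (c x); case: (odd m).
Qed.

Lemma d_adj_neq a b : adj a b -> a != b -> d a != d b.
Proof.
move=> Hab Hne; have [c Hc] := bip.
apply/eqP => E; have := Hc _ _ Hab Hne.
by rewrite (d_parity Hc a) (d_parity Hc b) E eqxx.
Qed.

Definition n := size p.
Definition v i := nth x (x :: p) i.

Lemma v_adj i : i < n -> adj (v i) (v i.+1).
Proof.
move=> Hi; have [Pp _] := geo.
by have := (pathP x Pp) i Hi.
Qed.

Lemma v_adj2 i j : i <= n -> j <= n -> i <= j.+1 -> j <= i.+1 -> adj (v i) (v j).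
Proof.
move=> Hi Hj H1 H2.
have [E|[E|E]] : j = i \/ j = i.+1 \/ i = j.+1 by lia.
all: subst.
- exact: adj_refl.
- apply: v_adj; lia.
- rewrite adj_sym; apply: v_adj; lia.
Qed.

Lemma d_v j : j <= n -> d (v j) = j.
Proof.
move=> Hj; have [Pp Gp] := geo.
apply/eqP; rewrite eqn_leq; apply/andP; split.
  have := @ball_walk (take j p) x 0.
  rewrite /= inE eqxx => /(_ isT).
  have Pt : path adj x (take j p).
    by move: Pp; rewrite -{1}(cat_take_drop j p) cat_path => /andP [].
  move/(_ Pt); rewrite last_take_nth // size_take.
  case: ltnP => H; move/dmin => //.
  have -> : j = size p by apply/eqP; rewrite eqn_leq H Hj.
  by [].
rewrite leqNgt; apply/negP => Hlt.
have [q [Pq Lq Sq]] := walk_ball (dP (v j)).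
have Pd : path adj (v j) (drop j p).
  move: Pp; rewrite -{1}(cat_take_drop j p) cat_path => /andP [_].
  by rewrite last_take_nth.
have := Gp (q ++ drop j p).
have Ld : last (v j) (drop j p) = last x p.
  by rewrite /v -(last_take_nth x Hj) -last_cat cat_take_drop.
rewrite cat_path Pq Lq Pd last_cat Lq Ld.
move=> /(_ isT erefl); rewrite size_cat size_drop Sq /n.
move: Hlt Hj; rewrite /n; lia.
Qed.

Lemma v_in j : j <= n -> v j \in x :: p.
Proof. move=> Hj; apply: mem_nth => /=; rewrite /n in Hj; lia. Qed.

Definition H : {set T} := [set u in x :: p].

Definition s r := minn (d r) n.
Definition sh r := v (s r).

Lemma s_le r : s r <= n.
Proof. rewrite /s; lia. Qed.

Lemma sh_adj r r' : adj r r' -> adj (sh r) (sh r').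
Proof.
move=> Hr; have h1 := d_adj Hr; rewrite adj_sym in Hr; have h2 := d_adj Hr.
apply: v_adj2; rewrite /s; lia.
Qed.

Lemma sh_H r : r \in H -> sh r = r.
Proof.
rewrite inE => /(nthP x) [j Hj <-].
have Hj' : j <= n by rewrite /n; move: Hj => /=; lia.
by rewrite /sh /s -/(v j) d_v // (minn_idPl Hj').
Qed.

Definition Sinv (D : seq T) (r : T) : Prop := D = [:: sh r] /\ ~~ adj r (sh r).

Lemma guard_ok : guard_invariant adj H Sinv.
Proof.
move=> D r [-> Hnadj] r' Hrr'.
have Hne : sh r != r'.
  by apply/eqP => E; move: Hnadj; rewrite E Hrr'.
have -> : attack [:: sh r] r' = [:: sh r] by rewrite /attack /= (negbTE Hne).
case Hc: (adj (sh r) r').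
  exists [:: r']; split; first by rewrite /cop_move /= Hc.
  by left; rewrite inE.
exists [:: sh r']; split; first by rewrite /cop_move /= sh_adj.
case HH: (r' \in H).
  by left; rewrite sh_H // inE.
right; split => //.
split => //; apply/negP => Ha.
have Hne' : r' != sh r'.
  apply/eqP => E; move: HH; rewrite E /H inE v_in //; exact: s_le.
have := d_adj_neq Ha Hne'; rewrite /sh d_v ?s_le // => Hd.
have Hdn : n < d r' by move: Hd; rewrite /s; lia.
have Hsn : s r' = n by rewrite /s; lia.
have h2 := d_adj Hrr'.
have Hsr : s r = n by rewrite /s; lia.
by move: Hc; rewrite /sh Hsr -Hsn adj_sym Ha.
Qed.

Lemma guards_sh r : ~~ adj r (sh r) -> guards adj H [:: sh r] r.
Proof. move=> Hn; exists Sinv; split; [exact: guard_ok | by split]. Qed.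

Lemma gpos i r : s r = i -> ~~ adj r (v i) -> guard_position adj 1 H [:: v i; v i] r.
Proof.
move=> Hs Hn; exists [:: v i]; split => //.
- move=> u; rewrite inE => /eqP ->; rewrite /H inE v_in // -Hs; exact: s_le.
- by move=> u /=; rewrite addn0 leq_addr.
- by rewrite -Hs; apply: guards_sh; rewrite /sh Hs.
Qed.

Lemma force k : forall i r, n - i < k -> i <= s r ->
  cops_force adj 1 H [:: v i; v i] r.
Proof.
elim: k => [|k IH] i r Hk Hi; first by [].
case Ha: (adj (v i) r).
  apply: (@CF_step _ _ _ _ _ _ [:: r; r]); first by rewrite /cop_move /= Ha.
  by left; rewrite inE eqxx.
case: (ltngtP i (s r)) Hi => // Hlt _; last first.
  apply: (@CF_step _ _ _ _ _ _ [:: v i; v i]); first by rewrite /cop_move /= adj_refl.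
  right; left; apply: gpos => //; by rewrite adj_sym Ha.
have Hin : i < n by have := s_le r; lia.
apply: (@CF_step _ _ _ _ _ _ [:: v i.+1; v i.+1]); first by rewrite /cop_move /= v_adj.
case Er: (r == v i.+1); first by left; rewrite inE Er.
case Hg: ((s r == i.+1) && ~~ adj r (v i.+1)).
  by move/andP: Hg => [/eqP Hs Hn]; right; left; apply: gpos.
right; right => r' Hrr'.
case Er': (r' == v i.+1).
  have E2 : (v i.+1 == r') = true by rewrite eq_sym Er'.
  rewrite /attack /= E2.
  apply: (@CF_step _ _ _ _ _ _ [:: v i.+1]); first by rewrite /cop_move /= adj_refl.
  by left; rewrite inE Er'.
have E2 : (v i.+1 == r') = false by rewrite eq_sym Er'.
rewrite /attack /= E2.
apply: IH; first by lia.
have h1 := d_adj Hrr'.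
rewrite adj_sym in Hrr'; have h2 := d_adj Hrr'.
case: (ltnP i.+1 (s r)) => H2; first by move: H2; rewrite /s; lia.
have Hs : s r = i.+1 by lia.
move: Hg; rewrite Hs eqxx /= => /negbFE Hadj.
have Hne : r != v i.+1 by rewrite Er.
have := d_adj_neq Hadj Hne; rewrite d_v // => Hd.
have Hdn : n < d r by move: Hs Hd; rewrite /s; lia.
move: Hs; rewrite /s; lia.
Qed.

End Proof.

Theorem lemma4 (T : finType) (adj : rel T)
  (adj_refl : reflexive adj) (adj_sym : symmetric adj)
  (conn : connected_graph adj) (bip : bipartite adj)
  (x : T) (p : seq T) (geo : geodesic adj x p) :
  guardable adj 1 1 [set v in x :: p].
Proof.
exists [:: x; x]; split => // r0.
have := @force T adj adj_refl adj_sym conn bip x p geo (size p).+1 0 r0.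
rewrite /v /= => H; apply: H; first by rewrite subn0.
by [].
Qed.
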